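(* Let $C$ be a set of pairwise disjoint lines on ${\rm F}_5$ and put $C^i=C\cap\mathcal{L}^i$ for $i=0,1,2$, with $\#C^0\ge4$. Let $\{s,r\}=\{1,2\}$ and suppose $C^s=\{L^s_{a_0,b_0},\dots,L^s_{a_4,b_4}\}$ with $\#C^s=5$ and $\#C^r=4$. Then $\#\{a_0,\dots,a_4\}\ge3$.
   Context: ${\rm F}_5\subset\mathbb{P}^3(\mathbb{C})$ is the surface $x^5-y^5-z^5+w^5=0$. Let $\eta$ be a primitive 5th root of unity and $v=-1$. For $k,i\in\{0,\dots,4\}$ define $L^0_{k,i}:\{y=\eta^i x,\ w=\eta^k z\}$, $L^1_{k,i}:\{x=\eta^{k+i}z,\ y=\eta^i w\}$, $L^2_{k,i}:\{x=v\eta^i w,\ y=v\eta^{k+i}z\}$, and $\mathcal{L}^s=\{L^s_{k,i}\}_{k,i}$; these 75 lines are all the lines on ${\rm F}_5$. *)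

(* Defs.v *)
From HB Require Import structures.
From mathcomp Require Import all_boot all_order all_algebra.
Set Implicit Arguments. Unset Strict Implicit. Unset Printing Implicit Defensive.
Import Order.TTheory GRing.Theory Num.Theory.
Local Open Scope ring_scope.

(* A label (s, (k, i)) names the line L^s_{k,i} on F_5 : x^5-y^5-z^5+w^5 = 0. *)
Definition label := ('I_3 * ('I_5 * 'I_5))%type.

Definition fam (l : label) : nat := l.1.
Definition kidx (l : label) : nat := l.2.1.
Definition iidx (l : label) : nat := l.2.2.

Definition onLine (F : numClosedFieldType) (eta : F) (l : label)
    (x y z w : F) : bool :=
  let k := kidx l in let i := iidx l in
  match fam l with
  | 0%N => (y == eta ^+ i * x) && (w == eta ^+ k * z)
  | 1%N => (x == eta ^+ (k + i) * z) && (y == eta ^+ i * w)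
  | _ => (x == (-1) * eta ^+ i * w) && (y == (-1) * eta ^+ (k + i) * z)
  end.

(* Two lines meet in P^3 iff they share a nonzero point of F^4. *)
Definition meet (F : numClosedFieldType) (eta : F) (l l' : label) : Prop :=
  exists x y z w : F, ~~ [&& x == 0, y == 0, z == 0 & w == 0] /\
    onLine eta l x y z w /\ onLine eta l' x y z w.

Definition famPart (C : {set label}) (s : nat) : {set label} :=
  [set l in C | fam l == s].

(* Main.v *)
Require Import Defs.
From HB Require Import structures.
From mathcomp Require Import all_boot all_order all_algebra.
From mathcomp Require Import zify.
Set Implicit Arguments. Unset Strict Implicit. Unset Printing Implicit Defensive.
Import GRing.Theory.
Local Open Scope ring_scope.

Definition c1 (k i k' i' : nat) := ((2*i + k + 4*i') %% 5 == (k'+i') %% 5)%N.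
Definition c2 (k i k' i' : nat) := ((2*i' + k' + 4*i) %% 5 == (k+i) %% 5)%N.
Definition I5 := iota 0 5.
Definition chk (c : nat->nat->nat->nat->bool) :=
 all (fun k0 => all (fun k1 => all (fun k2 => all (fun k3 => all (fun k4 =>
 all (fun k' => all (fun i' =>
  let kf j := nth 0%N [:: k0;k1;k2;k3;k4] j in
  (uniq [seq (kf j + j) %% 5 | j <- I5])%N ==>
  all (fun j => ~~ c (kf j) j k' i') I5 ==>
  (2 < size (undup [seq kf j | j <- I5]))%N) I5) I5) I5) I5) I5) I5) I5.
Lemma chk1 : chk c1. Proof. vm_compute. reflexivity. Qed.
Lemma chk2 : chk c2. Proof. vm_compute. reflexivity. Qed.

Lemma chkP c (kf : nat -> nat) k' i' : chk c ->
  (forall j, j < 5 -> kf j < 5)%N -> (k' < 5)%N -> (i' < 5)%N ->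
  uniq [seq (kf j + j) %% 5 | j <- I5]%N ->
  (forall j, j < 5 -> ~~ c (kf j) j k' i')%N ->
  (2 < size (undup [seq kf j | j <- I5]))%N.
Proof.
move=> H Hk Hk' Hi' Hu Hc.
have mI : forall n, (n < 5)%N -> n \in I5 by move=> n; rewrite mem_iota.
have E : [seq kf j | j <- I5] =
   [seq nth 0%N [:: kf 0; kf 1; kf 2; kf 3; kf 4]%N j | j <- I5].
  by apply/eq_in_map => j; rewrite mem_iota; case: j => [|[|[|[|[|]]]]].
have E2 : [seq (kf j + j) %% 5 | j <- I5]%N =
   [seq (nth 0%N [:: kf 0; kf 1; kf 2; kf 3; kf 4]%N j + j) %% 5 | j <- I5]%N.
  by apply/eq_in_map => j; rewrite mem_iota; case: j => [|[|[|[|[|]]]]].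
move: H => /allP /(_ _ (mI _ (Hk 0%N isT))) /allP /(_ _ (mI _ (Hk 1%N isT)))
  /allP /(_ _ (mI _ (Hk 2%N isT))) /allP /(_ _ (mI _ (Hk 3%N isT)))
  /allP /(_ _ (mI _ (Hk 4%N isT))) /allP /(_ _ (mI _ Hk')) /allP /(_ _ (mI _ Hi')).
cbv zeta; rewrite -E -E2 Hu implyTb => /implyP; apply; apply/allP => j.
rewrite mem_iota add0n => /andP[_ Hj].
have -> : nth 0%N [:: kf 0; kf 1; kf 2; kf 3; kf 4]%N j = kf j
  by case: j Hj => [|[|[|[|[|]]]]].
exact: Hc.
Qed.

Section Geo.
Variables (F : numClosedFieldType) (eta : F) (Heta : 5.-primitive_root eta).

Lemma eexp (m n : nat) : (m %% 5 = n %% 5)%N -> eta ^+ m = eta ^+ n.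
Proof. by move=> E; rewrite -(prim_expr_mod Heta) E prim_expr_mod. Qed.

Lemma meet_sym l l' : meet eta l l' -> meet eta l' l.
Proof. by case=> x [y [z [w [H [H1 H2]]]]]; exists x, y, z, w. Qed.

Lemma meet_samei l l' : (fam l = 1 \/ fam l = 2)%N -> fam l' = fam l ->
  iidx l = iidx l' -> meet eta l l'.
Proof.
move=> [] Hf Hf' Hi.
- exists 0, (eta ^+ iidx l), 0, 1; rewrite /onLine Hf' Hf -Hi /= !mulr0 !mulr1 !eqxx; split=> //.
  by rewrite oner_eq0 !andbF.
- exists (- eta ^+ iidx l), 0, 0, 1; rewrite /onLine Hf' Hf -Hi /= !mulr0 !mulr1 !mulN1r !eqxx; split=> //.
  by rewrite oner_eq0 !andbF.
Qed.

Lemma meet_sameki l l' : (fam l = 1 \/ fam l = 2)%N -> fam l' = fam l ->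
  ((kidx l + iidx l) %% 5 = (kidx l' + iidx l') %% 5)%N -> meet eta l l'.
Proof.
move=> [] Hf Hf' Hi.
- exists (eta ^+ (kidx l + iidx l)), 0, 1, 0; rewrite /onLine Hf' Hf /= !mulr0 !mulr1 !eqxx (eexp Hi) eqxx; split=> //.
  by rewrite oner_eq0 !andbF.
- exists 0, (- eta ^+ (kidx l + iidx l)), 1, 0; rewrite /onLine Hf' Hf /= !mulr0 !mulr1 !mulN1r !eqxx (eexp Hi) eqxx; split=> //.
  by rewrite oner_eq0 !andbF.
Qed.

Lemma meet12 l l' : fam l = 1%N -> fam l' = 2%N ->
  c1 (kidx l) (iidx l) (kidx l') (iidx l') -> meet eta l l'.
Proof.
move=> Hf Hf' /eqP Hc.
set k := kidx l; set i := iidx l; set k' := kidx l'; set i' := iidx l'.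
set w := - eta ^+ (k + i + 4 * i').
exists (eta ^+ (k + i)), (eta ^+ i * w), 1, w.
rewrite /onLine Hf Hf' -/k -/i -/k' -/i' /= mulr1 !eqxx /=.
split; first by rewrite oner_eq0 !andbF.
split=> //; apply/andP; split; apply/eqP.
- by rewrite /w mulN1r mulrNN -exprD; apply: eexp; lia.
- rewrite /w mulr1 mulN1r mulrN -exprD; congr (- _); apply: eexp; move: Hc; lia.
Qed.

End Geo.

Theorem lemma3p5 (F : numClosedFieldType) (eta : F)
  (Heta : 5.-primitive_root eta) (C : {set label}) (s r : nat) :
  (forall l l', l \in C -> l' \in C -> l != l' -> ~ meet eta l l') ->
  (4 <= #|famPart C 0|)%N ->
  ((s, r) = (1%N, 2%N) \/ (s, r) = (2%N, 1%N)) ->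
  #|famPart C s| = 5%N ->
  #|famPart C r| = 4%N ->
  (3 <= #|[set l.2.1 | l in famPart C s]|)%N.
Proof.
move=> Hdisj _ Hsr Hs5 Hr4.
have Hs12 : (s = 1 \/ s = 2)%N by case: Hsr => [[-> _]|[-> _]]; [left|right].
set P := famPart C s.
have memP l : l \in P -> l \in C /\ fam l = s by rewrite inE => /andP[? /eqP].
have inj : {in P &, injective (fun l : label => l.2.2)}.
  move=> l l' Hl Hl' E; apply/eqP; apply/negPn/negP => Hne.
  case: (memP _ Hl) (memP _ Hl') => HC Hf [HC' Hf'].
  apply: (Hdisj _ _ HC HC' Hne); apply: meet_samei.
  - by rewrite Hf.
  - by rewrite Hf Hf'.
  - by rewrite /iidx E.
have surj : forall j : 'I_5, exists l, (l \in P) && (l.2.2 == j).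
  have Hc : #|[set l.2.2 | l in P]| = 5%N by rewrite card_in_imset.
  have HT : [set l.2.2 | l in P] = setT.
    by apply/eqP; rewrite eqEcard subsetT cardsT card_ord Hc.
  move=> j; have : j \in [set l.2.2 | l in P] by rewrite HT inE.
  by case/imsetP => l Hl ->; exists l; rewrite Hl eqxx.
pose g j := xchoose (surj j).
have Hg j : g j \in P /\ (g j).2.2 = j.
  by have /andP[H1 /eqP H2] := xchooseP (surj j).
have : (0 < #|famPart C r|)%N by rewrite Hr4.
case/card_gt0P => l' Hl'.
have [HCl' Hfl'] : l' \in C /\ fam l' = r by move: Hl'; rewrite inE => /andP[? /eqP].
pose kf (j : nat) := kidx (g (inord j)).
have Hgi j : (j < 5)%N -> iidx (g (inord j)) = j.
  by move=> Hj; rewrite /iidx (Hg _).2 inordK.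
have Hkf j : (j < 5)%N -> (kf j < 5)%N by move=> _; apply: ltn_ord.
have Hu : uniq [seq (kf j + j) %% 5 | j <- I5]%N.
  rewrite map_inj_in_uniq ?iota_uniq // => j1 j2; rewrite !mem_iota !add0n => /andP[_ H1] /andP[_ H2] E.
  apply/eqP; apply/negPn/negP => Hne.
  have Hne' : g (inord j1) != g (inord j2).
    apply/negP => /eqP E'; move: (Hgi _ H1) (Hgi _ H2); rewrite E' => -> Ej.
    by rewrite Ej eqxx in Hne.
  case: (memP _ (Hg (inord j1)).1) (memP _ (Hg (inord j2)).1) => HC Hf [HC' Hf'].
  apply: (Hdisj _ _ HC HC' Hne'); apply: (meet_sameki Heta).
  - by rewrite Hf.
  - by rewrite Hf Hf'.
  - by rewrite (Hgi _ H1) (Hgi _ H2).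
have Hsz : (2 < size (undup [seq kf j | j <- I5]))%N.
  case: Hsr Hs5 Hr4 Hfl' memP Hg {Hs12} => [][-> ->] _ _ Hfl' memP Hg.
  - apply: (chkP (k' := kidx l') (i' := iidx l') chk1 Hkf (ltn_ord _) (ltn_ord _) Hu).
    move=> j Hj; apply/negP => Hc.
    case: (memP _ (Hg (inord j)).1) => HC Hf.
    have Hne : g (inord j) != l' by apply/negP => /eqP E; move: Hf; rewrite E Hfl'.
    apply: (Hdisj _ _ HC HCl' Hne); apply: (meet12 Heta Hf Hfl').
    by rewrite (Hgi _ Hj).
  - apply: (chkP (k' := kidx l') (i' := iidx l') chk2 Hkf (ltn_ord _) (ltn_ord _) Hu).
    move=> j Hj; apply/negP => Hc.
    case: (memP _ (Hg (inord j)).1) => HC Hf.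
    have Hne : l' != g (inord j) by apply/negP => /eqP E; move: Hf; rewrite -E Hfl'.
    apply: (Hdisj _ _ HCl' HC Hne); apply: (meet12 Heta Hfl' Hf).
    by rewrite /c1 (Hgi _ Hj).
pose s0 := [seq (g (inord j)).2.1 | j <- I5].
have E0 : [seq kf j | j <- I5] = map val s0 by rewrite /s0 -map_comp.
rewrite E0 undup_map_inj ?size_map in Hsz; last exact: val_inj.
have Es : size (undup s0) = #|mem s0|.
  by rewrite -(eq_card (mem_undup s0)); symmetry; apply/card_uniqP; apply: undup_uniq.
rewrite Es in Hsz; apply: leq_trans Hsz (subset_leq_card _).
apply/subsetP => x /mapP [j _ ->].
by apply/imsetP; exists (g (inord j)) => //; exact: (Hg _).1.
Qed.
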